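(* Let $p$ be a prime, $r\geq 1$ and $d\geq 0$. Then $$\sum_{\lambda\in\mathrm{Par}(d)}\Big(\sum_{i=0}^{r-1}l(\lambda^{(i)})+d_p(\lambda^{(r-1)})\Big)=l(d).$$
   Context: $\mathrm{Par}(d)$ is the set of partitions of $d$; $m_n(\lambda)$ denotes the multiplicity of the part $n$ in $\lambda$, $l(\lambda)$ the number of parts, and $l(d)=\sum_{\lambda\in\mathrm{Par}(d)}l(\lambda)$. The $p$-adic decomposition of $\lambda$ is $\lambda=\lambda^{(0)}+p\lambda^{(1)}+p^2\lambda^{(2)}+\cdots$, where each $\lambda^{(i)}$ is a partition with no part divisible by $p$, determined by $m_n(\lambda^{(i)})=m_{p^in}(\lambda)$ for all $n$ with $p\nmid n$ (so $\lambda^{(i)}$ consists of the parts of $\lambda$ of $p$-adic valuation exactly $i$, divided by $p^i$). For an integer $a\geq0$, $d_p(a)=\sum_{j\geq1}\lfloor a/p^j\rfloor$, and for a partition $\mu$, $d_p(\mu)=\sum_{n\geq1}d_p(m_n(\mu))$. *)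

(* Defs.v *)
From mathcomp Require Import all_boot.
Set Implicit Arguments. Unset Strict Implicit. Unset Printing Implicit Defensive.

Definition is_partition (d : nat) (s : seq nat) : bool :=
  [&& sorted geq s, all (fun x => 0 < x) s & sumn s == d].

(* Every partition of d
   has at most d parts, each at most d, so it is obtained from some
   d-tuple with entries in [0, d] by deleting the zero entries. *)
Definition Par (d : nat) : seq (seq nat) :=
  [seq s <- undup [seq [seq val x | x <- (t : seq 'I_d.+1) & 0 < val x]
                  | t : d.-tuple 'I_d.+1]
     | is_partition d s].

Definition mult (n : nat) (lam : seq nat) : nat := count_mem n lam.

Definition len (lam : seq nat) : nat := size lam.

Definition ltot (d : nat) : nat := \sum_(lam <- Par d) len lam.

Definition padic_comp (p i : nat) (lam : seq nat) : seq nat :=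
  [seq x %/ p ^ i | x <- lam & logn p x == i].

(* d_p(a) = sum_{j>=1} floor(a / p^j); for p >= 2 terms with j > a vanish. *)
Definition dp_nat (p a : nat) : nat := \sum_(1 <= j < a.+1) a %/ p ^ j.

(* d_p(mu) = sum_{n>=1} d_p(m_n(mu)); m_n(mu) = 0 for n > sumn mu. *)
Definition dp_part (p : nat) (mu : seq nat) : nat :=
  \sum_(1 <= n < (sumn mu).+1) dp_nat p (mult n mu).

(* Main.v *)
Require Import Defs.
From mathcomp Require Import all_boot.
Set Implicit Arguments. Unset Strict Implicit. Unset Printing Implicit Defensive.

Lemma Par_uniq d : uniq (Par d).
Proof. by rewrite /Par filter_uniq // undup_uniq. Qed.

Lemma size_le_sumn s : all (fun x => 0 < x) s -> size s <= sumn s.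
Proof.
elim: s => //= x s IH /andP[x0 /IH]; rewrite -addn1 addnC => H.
exact: leq_add.
Qed.

Lemma mem_le_sumn s x : x \in s -> x <= sumn s.
Proof.
elim: s => //= y s IH; rewrite in_cons => /orP[/eqP->|/IH H].
  exact: leq_addr.
exact: leq_trans H (leq_addl _ _).
Qed.

Lemma mem_Par d s : (s \in Par d) = is_partition d s.
Proof.
rewrite /Par mem_filter; case Hp: (is_partition d s) => //=.
rewrite mem_undup.
move: Hp => /and3P[Hs Hpos /eqP Hsum].
have Hsz : size s <= d by rewrite -Hsum size_le_sumn.
pose s0 := s ++ nseq (d - size s) 0.
have Hs0 : size (map (@inord d) s0) == d.
  by rewrite size_map size_cat size_nseq subnKC.
apply/mapP; exists (Tuple Hs0); first by rewrite mem_enum.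
rewrite /= filter_map -map_comp.
have -> : [seq x <- s0 | preim (@inord d) (fun x : 'I_d.+1 => 0 < val x) x]
   = s.
  rewrite /s0 filter_cat.
  have -> : [seq x <- nseq (d - size s) 0 | preim (@inord d) (fun x : 'I_d.+1 => 0 < val x) x] = [::].
    apply/eqP; rewrite -[_ == _]negbK -has_filter; apply/hasPn => x /nseqP[-> _].
    by rewrite /= inordK.
  rewrite cats0; apply/all_filterP/allP => x xs /=.
  rewrite inordK; last by rewrite ltnS -Hsum mem_le_sumn.
  exact: (allP Hpos).
rewrite -[LHS]map_id; apply/eq_in_map => x xs /=.
by rewrite inordK // ltnS -Hsum mem_le_sumn.
Qed.

Definition remn (c a : nat) (s : seq nat) := iter c (rem a) s.

Lemma remn_perm c a s : c <= count_mem a s -> perm_eq s (nseq c a ++ remn c a s).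
Proof.
elim: c => [|c IH] Hc; first by rewrite perm_refl.
have P := IH (ltnW Hc).
have Hin : a \in remn c a s.
  have := (permP P) (pred1 a); rewrite count_cat count_nseq /= eqxx mul1n.
  move=> E; rewrite -has_pred1 has_count; move: Hc; rewrite E.
  by rewrite -addn1 leq_add2l.
apply: (perm_trans P).
rewrite [remn c.+1 a s]/remn iterS -/(remn c a s).
rewrite [nseq c.+1 a]/= -[a :: _]cat1s -catA perm_sym perm_catCA perm_cat2l cat1s perm_sym.
exact: perm_to_rem.
Qed.

Lemma remn_subseq c a s : subseq (remn c a s) s.
Proof.
elim: c => [|c IH] /=; first exact: subseq_refl.
exact: subseq_trans (rem_subseq _ _) IH.
Qed.

Lemma geq_trans : transitive geq.
Proof. by move=> x y z H1 H2; exact: leq_trans H2 H1. Qed.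
Lemma geq_anti : antisymmetric geq.
Proof. by move=> x y H; apply/eqP; rewrite eqn_leq andbC. Qed.
Lemma geq_total : total geq.
Proof. by move=> x y; exact: leq_total. Qed.

Lemma remn_sort c a m : sorted geq m -> remn c a (sort geq (nseq c a ++ m)) = m.
Proof.
move=> Hm; set l := sort geq _.
have Hc : c <= count_mem a l.
  by rewrite ((permP (permEl (perm_sort geq _))) (pred1 a)) count_cat count_nseq /= eqxx mul1n leq_addr.
have P := remn_perm Hc.
apply: (sorted_eq geq_trans geq_anti).
- apply: (subseq_sorted geq_trans (remn_subseq _ _ _)); exact: sort_sorted geq_total _.
- exact: Hm.
rewrite -(perm_cat2l (nseq c a)) perm_sym; apply: (perm_trans _ P).
by rewrite perm_sym perm_sort.
Qed.

Lemma sort_remn c a l : sorted geq l -> c <= count_mem a l ->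
  sort geq (nseq c a ++ remn c a l) = l.
Proof.
move=> Hl Hc; apply: (sorted_eq geq_trans geq_anti).
- exact: sort_sorted geq_total _.
- exact: Hl.
by rewrite perm_sort perm_sym remn_perm.
Qed.

Lemma count_le_sumn a l : a * count_mem a l <= sumn l.
Proof.
elim: l => [|x l IH] /=; first by rewrite muln0. rewrite mulnDr; apply: leq_add => //.
by case: eqP => [->|_]; rewrite ?muln1 ?muln0.
Qed.

Lemma count_Par d a c : 0 < a ->
  count (fun l => c <= count_mem a l) (Par d) =
  if c * a <= d then size (Par (d - c * a)) else 0.
Proof.
move=> a0; case: leqP => Hca; last first.
  apply/eqP; rewrite -leqn0 leqNgt -has_count; apply/hasPn => l.
  rewrite mem_Par => /and3P[_ _ /eqP Hs]; rewrite -ltnNge ltnNge; apply/negP => H.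
  have := leq_trans (leq_mul H (leqnn a)) (leq_trans (eq_leq (mulnC _ _)) (count_le_sumn a l)); by rewrite Hs leqNgt Hca.
set L := [seq l <- Par d | c <= count_mem a l].
have HL l : l \in L -> [/\ is_partition d l, c <= count_mem a l &
   sort geq (nseq c a ++ remn c a l) = l].
  rewrite mem_filter mem_Par => /andP[Hc Hp]; split => //.
  by apply: sort_remn => //; case/and3P: Hp.
rewrite -size_filter -/L -[size L](size_map (remn c a)).
apply: perm_size; apply: uniq_perm.
- rewrite map_inj_in_uniq; first by rewrite filter_uniq // Par_uniq.
  move=> x y /HL[_ _ Ex] /HL[_ _ Ey] E.
  by rewrite -Ex -Ey E.
- exact: Par_uniq.
move=> m; rewrite mem_Par; apply/mapP/idP.
  case=> l /HL[/and3P[Hs Hpos /eqP Hsum] Hc _] ->.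
  have P := remn_perm Hc.
  apply/and3P; split.
  - by apply: (subseq_sorted geq_trans (remn_subseq _ _ _)).
  - apply/allP => x /(mem_subseq (remn_subseq _ _ _)) xl; exact: (allP Hpos).
  - by rewrite -Hsum (perm_sumn P) sumn_cat sumn_nseq mulnC addKn.
case/and3P => Hs Hpos /eqP Hsum.
exists (sort geq (nseq c a ++ m)); last by rewrite remn_sort.
have Pm := permEl (perm_sort geq (nseq c a ++ m)).
rewrite mem_filter mem_Par; apply/andP; split.
  by rewrite ((permP Pm) (pred1 a)) count_cat count_nseq /= eqxx mul1n leq_addr.
apply/and3P; split.
- exact: sort_sorted geq_total _.
- rewrite (perm_all _ Pm) all_cat Hpos andbT; apply/allP => x /nseqP[-> _]; exact: a0.
- by rewrite (perm_sumn Pm) sumn_cat sumn_nseq Hsum mulnC subnKC.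
Qed.

Lemma sum_count T (s : seq T) (P : pred T) : \sum_(x <- s) (P x : nat) = count P s.
Proof. by elim: s => [|x s IH]; rewrite ?big_nil // big_cons IH. Qed.

Lemma sum_le c N : c <= N -> \sum_(1 <= j < N.+1) (j <= c : nat) = c.
Proof.
move=> H; rewrite (big_cat_nat _ (n := c.+1)) //=.
have -> : \sum_(c.+1 <= j < N.+1) (j <= c : nat) = 0.
  rewrite big_nat_cond big1 //.
  by move=> j /andP[/andP[H1 _] _]; rewrite leqNgt H1.
have -> : \sum_(1 <= j < c.+1) (j <= c : nat) = \sum_(1 <= j < c.+1) 1.
  rewrite big_nat_cond [RHS]big_nat_cond; apply: eq_bigr.
  by move=> j /andP[/andP[_ H1] _]; rewrite -ltnS H1.
by rewrite sum_nat_const_nat subn1 muln1 addn0.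
Qed.

Lemma div_sum m t N : 0 < t -> m <= N ->
  m %/ t = \sum_(1 <= j < N.+1) (j * t <= m : nat).
Proof.
move=> t0 H; rewrite -(sum_le (c := m %/ t) (N := N)); last first.
  exact: leq_trans (leq_div _ _) H.
by apply: eq_bigr => j _; rewrite leq_divRL.
Qed.

Lemma count_le_d d a l : l \in Par d -> count_mem a l <= d.
Proof.
rewrite mem_Par => /and3P[_ Hp /eqP Hs].
by rewrite -Hs; apply: leq_trans (count_size _ _) (size_le_sumn Hp).
Qed.

Lemma sum_div_gen d a t : 0 < a -> 0 < t ->
  \sum_(l <- Par d) (count_mem a l %/ t) =
  \sum_(1 <= j < d.+1) (if j * t * a <= d then size (Par (d - j * t * a)) else 0).
Proof.
move=> a0 t0.
rewrite (eq_big_seq (fun l => \sum_(1 <= j < d.+1) (j * t <= count_mem a l : nat))); last first.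
  by move=> l Hl; apply: div_sum => //; exact: count_le_d.
rewrite exchange_big; apply: eq_bigr => j _.
by rewrite sum_count count_Par.
Qed.

Lemma keyK d a t : 0 < a -> 0 < t ->
  \sum_(l <- Par d) (count_mem a l %/ t) = \sum_(l <- Par d) count_mem (t * a) l.
Proof.
move=> a0 t0.
rewrite [RHS](eq_bigr (fun l => count_mem (t * a) l %/ 1)); last by move=> l _; rewrite divn1.
rewrite !sum_div_gen ?muln_gt0 ?a0 ?t0 //.
by apply: eq_bigr => j _; rewrite muln1 mulnA.
Qed.

Lemma sum_single m N n0 (F : nat -> nat) : m <= n0 < N ->
  (forall n, m <= n < N -> n != n0 -> F n = 0) -> \sum_(m <= n < N) F n = F n0.
Proof.
move=> Hn0 H; rewrite (bigD1_seq n0) ?mem_index_iota ?iota_uniq //=.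
rewrite big1_seq ?addn0 // => n /andP[nn0]; rewrite mem_index_iota => Hn.
exact: H.
Qed.

Lemma logn_pn p k n : prime p -> 0 < n -> ~~ (p %| n) -> logn p (p ^ k * n) = k.
Proof.
move=> pp n0 pn; rewrite lognM ?expn_gt0 ?(prime_gt0 pp) // pfactorK //.
by rewrite logn_coprime ?addn0 // prime_coprime.
Qed.

Lemma decomp p x : prime p -> 0 < x ->
  [/\ x = p ^ logn p x * (x %/ p ^ logn p x), 0 < x %/ p ^ logn p x
    & ~~ (p %| x %/ p ^ logn p x)].
Proof.
move=> pp x0; have D := pfactor_dvdnn p x.
have E : x = p ^ logn p x * (x %/ p ^ logn p x) by rewrite mulnC divnK.
split => //.
  by rewrite divn_gt0 ?pfactor_gt0 //; apply: dvdn_leq.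
apply/negP => /dvdnP[k Ek].
have : p ^ (logn p x).+1 %| x.
  by rewrite [X in _ %| X]E Ek mulnCA expnSr; apply: dvdn_mull.
by rewrite pfactor_dvdn // ltnn.
Qed.

Lemma comp_pred p i n x : prime p -> 0 < n ->
  ((logn p x == i) && (x %/ p ^ i == n)) = (~~ (p %| n) && (x == p ^ i * n)).
Proof.
move=> pp n0; apply/idP/idP.
  case/andP => /eqP Hl /eqP Hq.
  have x0 : 0 < x by case: x Hl Hq n0 => [|x] //= _ <-; rewrite div0n.
  have [E _ pn] := decomp pp x0; rewrite Hl Hq in E pn.
  by rewrite pn -E eqxx.
case/andP => pn /eqP ->; rewrite logn_pn // eqxx /=.
by rewrite mulKn ?expn_gt0 ?prime_gt0.
Qed.

Lemma mult_comp p i n l : prime p -> 0 < n ->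
  mult n (padic_comp p i l) = (~~ (p %| n)) * count_mem (p ^ i * n) l.
Proof.
move=> pp n0; rewrite /mult /padic_comp count_map count_filter.
have -> : count (predI (preim (divn^~ (p ^ i)) (pred1 n)) (fun x : nat => logn p x == i)) l
   = count (fun x => ~~ (p %| n) && (x == p ^ i * n)) l.
  by apply: eq_count => x /=; rewrite andbC comp_pred.
by case: (~~ (p %| n)); rewrite ?mul1n ?mul0n //= count_pred0.
Qed.

Lemma uniq_dec p k n x : prime p -> 0 < n -> ~~ (p %| n) -> x = p ^ k * n ->
  logn p x = k /\ n = x %/ p ^ logn p x.
Proof.
move=> pp n0 pn ->; rewrite logn_pn //; split => //.
by rewrite mulKn // expn_gt0 prime_gt0.
Qed.

Lemma per_x p r d x : prime p -> 0 < r -> 0 < x -> x <= d ->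
  \sum_(1 <= n < d.+1) \sum_(1 <= j < d.+1)
      ((~~ (p %| n)) * (x == p ^ j * (p ^ r.-1 * n)) : nat) = (r <= logn p x).
Proof.
move=> pp r0 x0 xd.
have Hterm n j : 0 < n -> ~~ (p %| n) -> x = p ^ j * (p ^ r.-1 * n) ->
    logn p x = j + r.-1 /\ n = x %/ p ^ logn p x.
  by move=> n0 pn E; apply: uniq_dec => //; rewrite E mulnA -expnD.
have [E n0 pn0] := decomp pp x0.
set e := logn p x in E n0 pn0 Hterm *; set m := x %/ p ^ e in E n0 pn0 Hterm *.
case: leqP => Hr; last first.
  rewrite big_nat big1 // => n /andP[n1 _]; rewrite big_nat big1 // => j /andP[j1 _].
  case: (boolP (p %| n)) => //= pn; case: eqP => // E'.
  have [H _] := Hterm n j n1 pn E'.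
  have : j + r.-1 < r.-1.+1 by rewrite prednK // -H.
  by rewrite ltnS -{2}[r.-1]add0n leq_add2r leqn0 => /eqP j0; rewrite j0 in j1.
have em : 0 < m <= d by rewrite n0 /=; apply: leq_trans (leq_div _ _) xd.
rewrite (sum_single (n0 := m)) //; last first.
  move=> n /andP[n1 _] nm; rewrite big_nat big1 // => j _.
  case: (boolP (p %| n)) => //= pn; case: eqP => // E'.
  have [_ H] := Hterm n j n1 pn E'; by rewrite H eqxx in nm.
have ej : 0 < e - r.-1 <= d.
  rewrite subn_gt0 (leq_trans _ Hr) /=; last by rewrite -(prednK r0).
  apply: leq_trans (leq_subr _ _) _; apply: leq_trans xd.
  apply: leq_trans (ltnW (ltn_expl e (prime_gt1 pp))) _.
  by apply: dvdn_leq => //; exact: pfactor_dvdnn.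
rewrite (sum_single (n0 := e - r.-1)) //.
  rewrite mulnA -expnD subnK; last by apply: leq_trans Hr; rewrite leq_pred.
  by rewrite pn0 -E eqxx.
move=> j /andP[j1 _] jn; rewrite pn0 /=; case: eqP => // E'.
have [H _] := Hterm m j n0 pn0 E'.
by move: jn; rewrite H addnK eqxx.
Qed.

Lemma dp_nat_ext p m N : 1 < p -> m <= N ->
  dp_nat p m = \sum_(1 <= j < N.+1) m %/ p ^ j.
Proof.
move=> p1 mN; rewrite [RHS](big_cat_nat _ (n := m.+1)) //=.
have -> : \sum_(m.+1 <= j < N.+1) m %/ p ^ j = 0.
  rewrite big_nat big1 // => j /andP[Hj _].
  by rewrite divn_small //; exact: leq_trans Hj (ltnW (ltn_expl j p1)).
by rewrite addn0.
Qed.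

Lemma dp_part_ext p mu N : 1 < p -> sumn mu <= N -> size mu <= N ->
  dp_part p mu = \sum_(1 <= n < N.+1) \sum_(1 <= j < N.+1) mult n mu %/ p ^ j.
Proof.
move=> p1 sN zN; rewrite [RHS](big_cat_nat _ (n := (sumn mu).+1)) //=.
have -> : \sum_((sumn mu).+1 <= n < N.+1) \sum_(1 <= j < N.+1) mult n mu %/ p ^ j = 0.
  rewrite big_nat big1 // => n /andP[Hn _].
  have -> : mult n mu = 0.
    apply/eqP; rewrite -leqn0 leqNgt -has_count has_pred1; apply/negP.
    by move=> /mem_le_sumn; rewrite leqNgt Hn.
  by rewrite big_nat big1 // => j _; rewrite div0n.
rewrite addn0; apply: eq_bigr => n _; apply: dp_nat_ext => //.
exact: leq_trans (count_size _ _) zN.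
Qed.

Lemma comp_sumn p i s : sumn (padic_comp p i s) <= sumn s.
Proof.
rewrite /padic_comp; elim: s => //= x s IH.
case: (logn p x == i) => /=; last exact: leq_trans IH (leq_addl _ _).
exact: leq_add (leq_div _ _) IH.
Qed.

Lemma comp_size p i s : size (padic_comp p i s) <= size s.
Proof. by rewrite /padic_comp size_map size_filter count_size. Qed.

Lemma sum_eq_lt k r : \sum_(0 <= i < r) (k == i : nat) = (k < r).
Proof.
elim: r => [|r IH]; first by rewrite big_geq.
rewrite big_nat_recr //= IH [in RHS]ltnS [in RHS]leq_eqVlt.
by case: (ltngtP k r) => //= ->; rewrite eqxx.
Qed.

Lemma len_split p r l :
  len l = \sum_(0 <= i < r) len (padic_comp p i l) + count (fun x => r <= logn p x) l.
Proof.
have -> : \sum_(0 <= i < r) len (padic_comp p i l) = count (fun x => logn p x < r) l.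
  rewrite (eq_bigr (fun i => count (fun x => logn p x == i) l)); last first.
    by move=> i _; rewrite /len /padic_comp size_map size_filter.
  elim: l => [|x l IH] /=; first by rewrite big1.
  by rewrite big_split /= sum_eq_lt IH.
rewrite /len -(count_predC (fun x => logn p x < r)); congr (_ + _).
by apply: eq_count => x; rewrite /= -leqNgt.
Qed.

Theorem mainTheorem4 (p r d : nat) :
  prime p -> 1 <= r ->
  \sum_(lam <- Par d)
     (\sum_(0 <= i < r) len (padic_comp p i lam)
      + dp_part p (padic_comp p r.-1 lam))
  = ltot d.
Proof.
move=> pp r0; have p1 := prime_gt1 pp.
rewrite /ltot [RHS](eq_bigr _ (fun l _ => len_split p r l)) !big_split /=.
congr (_ + _).
pose G n j l := (~~ (p %| n)) * count_mem (p ^ j * (p ^ r.-1 * n)) l.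
have HL : forall l, l \in Par d -> dp_part p (padic_comp p r.-1 l) =
    \sum_(1 <= n < d.+1) \sum_(1 <= j < d.+1) mult n (padic_comp p r.-1 l) %/ p ^ j.
  move=> l; rewrite mem_Par => /and3P[_ Hpos /eqP Hs].
  apply: dp_part_ext => //.
    by rewrite -Hs comp_sumn.
  by apply: leq_trans (comp_size _ _ _) _; rewrite -Hs size_le_sumn.
have HR : forall l, l \in Par d -> count (fun x => r <= logn p x) l =
    \sum_(1 <= n < d.+1) \sum_(1 <= j < d.+1) G n j l.
  move=> l; rewrite mem_Par => /and3P[_ Hpos /eqP Hs].
  have HG n j : G n j l = \sum_(x <- l) ((~~ (p %| n)) * (x == p ^ j * (p ^ r.-1 * n)) : nat).
    by rewrite /G -sum_count big_distrr.
  under eq_bigr do under eq_bigr do rewrite HG.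
  under eq_bigr do rewrite exchange_big.
  rewrite exchange_big -sum_count; apply: eq_big_seq => x xl.
  rewrite per_x //.
    exact: (allP Hpos).
  by rewrite -Hs mem_le_sumn.
rewrite (eq_big_seq _ HL) [RHS](eq_big_seq _ HR).
rewrite exchange_big [RHS]exchange_big; apply: eq_big_nat => n /andP[n1 _].
rewrite exchange_big [RHS]exchange_big; apply: eq_big_nat => j /andP[j1 _].
rewrite /G; under eq_bigr do rewrite mult_comp //.
case: (~~ (p %| n)) => /=.
  rewrite (eq_bigr (fun l => count_mem (p ^ r.-1 * n) l %/ p ^ j)); last by move=> l _; rewrite mul1n.
  rewrite [RHS](eq_bigr (fun l => count_mem (p ^ j * (p ^ r.-1 * n)) l)); last by move=> l _; rewrite mul1n.
  by apply: keyK; rewrite ?muln_gt0 expn_gt0 (prime_gt0 pp) ?n1.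
by rewrite !big1 // => l _; rewrite mul0n ?div0n.
Qed.
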